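(* There is an absolute constant $C$ such that for every alphabet $\Sigma$, every positive integer $d$, every string $T$ over $\Sigma$ of length $n>d$, and every integer $i$ with $1\le i\le n-d$, $|\mathsf{MAW}(T[i..i+d-1])\bigtriangleup\mathsf{MAW}(T[i+1..i+d])|\le Cd$ (i.e., it is $O(d)$). Also, there is an absolute constant $c>0$ such that for every $d\ge 1$ there exist a string $T'$ and an integer $j$ with $1\le j\le|T'|-d$ satisfying $|\mathsf{MAW}(T'[j..j+d-1])\bigtriangleup\mathsf{MAW}(T'[j+1..j+d])|\ge cd$ (i.e., it is $\Omega(d)$).
   Context: For a string $S$ over alphabet $\Sigma$, a string $w\in\Sigma^*$ is a minimal absent word (MAW) of $S$ if $w$ does not occur in $S$ but every proper substring of $w$ (including the empty string) occurs in $S$; $\mathsf{MAW}(S)$ is the set of all MAWs of $S$. $T[a..b]$ denotes the substring of $T$ from position $a$ to $b$; $\bigtriangleup$ is symmetric difference. *)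

(* Defs.v *)
From mathcomp Require Import all_boot all_order all_algebra.
Set Implicit Arguments. Unset Strict Implicit. Unset Printing Implicit Defensive.

Definition occurs (Sigma : eqType) (w S : seq Sigma) : bool := infix w S.

Definition MAW (Sigma : eqType) (S w : seq Sigma) : Prop :=
  ~~ occurs w S /\ (forall u : seq Sigma, infix u w -> u != w -> occurs u S).

Definition MAW_symdiff (Sigma : eqType) (S1 S2 w : seq Sigma) : Prop :=
  (MAW S1 w /\ ~ MAW S2 w) \/ (MAW S2 w /\ ~ MAW S1 w).

(* |X| <= k for a set X of words: X is finite and has at most k elements,
   i.e. it is enumerated by a duplicate-free list of length <= k. *)
Definition card_le (Sigma : eqType) (X : seq Sigma -> Prop) (k : rat) : Prop :=
  exists s : seq (seq Sigma), [/\ uniq s, (forall w, w \in s <-> X w)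
                                 & ((size s)%:R <= k)%R].

Definition card_ge (Sigma : eqType) (X : seq Sigma -> Prop) (k : rat) : Prop :=
  exists s : seq (seq Sigma), [/\ uniq s, (forall w, w \in s -> X w)
                                 & (k <= (size s)%:R)%R].

(* 1-based substring T[i..i+d-1] *)
Definition window (Sigma : Type) (T : seq Sigma) (i d : nat) : seq Sigma :=
  take d (drop i.-1 T).

(* Main.v *)
Require Import Defs.
From mathcomp Require Import all_boot all_order all_algebra.
From mathcomp Require Import zify.
From Stdlib Require Import Classical ClassicalEpsilon.

Set Implicit Arguments. Unset Strict Implicit. Unset Printing Implicit Defensive.

Lemma infix_proper (S : eqType) (u w : seq S) :
  infix u w -> u != w -> infix u (behead w) || infix u (take (size w).-1 w).
Proof.
move/infixP => [s1 [s2 ->]]; case: s1 => [|y s1] /=; last first.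
  by rewrite infix_infix.
case/lastP: s2 => [|s2 z]; first by rewrite cats0 eqxx.
move=> _; apply/orP; right.
rewrite -rcons_cat size_rcons /= -cats1 take_size_cat //; exact: prefix_infix.
Qed.

Lemma MAW_rev (S : eqType) (T w : seq S) : MAW T w -> MAW (rev T) (rev w).
Proof.
move=> [nw H]; split; first by rewrite /occurs infix_rev.
move=> u uw ne; rewrite /occurs -[u]revK infix_rev; apply: H.
  by rewrite -infix_rev revK.
by apply: contra ne => /eqP <-; rewrite revK.
Qed.

Lemma occ_A_notB (S : eqType) (a b : S) X u :
  infix u (a :: X) -> ~~ infix u (rcons X b) -> prefix u (a :: X).
Proof.
rewrite infix_consl => /orP [//| H] /negP []; by rewrite infix_rconsl H orbT.
Qed.

Lemma occ_B_notA (S : eqType) (a b : S) X u :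
  infix u (rcons X b) -> ~~ infix u (a :: X) -> suffix u (rcons X b).
Proof.
rewrite infix_rconsl => /orP [//| H] /negP []; by rewrite infix_consl H orbT.
Qed.

Fixpoint lcp (S : eqType) (s t : seq S) : nat :=
  match s, t with
  | x :: s', y :: t' => if x == y then (lcp s' t').+1 else 0
  | _, _ => 0
  end.

Lemma lcp_eq (S : eqType) (a : S) (s t : seq S) j :
  take j s = take j t -> j < size s -> j < size t -> nth a s j != nth a t j ->
  lcp s t = j.
Proof.
elim: s t j => [|x s IH] [|y t] [|j] //=.
  by move=> _ _ _ /negbTE ->.
move=> [-> e] h1 h2 h3; rewrite eqxx (IH t j) //.
Qed.

Lemma find_iota_eq (p : pred nat) m k :
  k < m -> p k -> (forall j, j < k -> ~~ p j) -> find p (iota 0 m) = k.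
Proof.
move=> km pk hj.
have hs : has p (iota 0 m) by apply/hasP; exists k => //; rewrite mem_iota.
have fs : find p (iota 0 m) < m by move: hs; rewrite has_find size_iota.
case: (ltngtP (find p (iota 0 m)) k) => // c.
  have := nth_find 0 hs; rewrite nth_iota // add0n => pf.
  by move: (hj _ c); rewrite pf.
by have := before_find 0 c; rewrite nth_iota // add0n pk.
Qed.

Definition kmin (S : eqType) (A : seq S) (x : S) : nat :=
  find (fun k => ~~ infix (x :: take k A) A) (iota 0 (size A).+1).

Definition cand (S : eqType) (a : S) (X : seq S) (b : S) : seq (seq S) :=
  let A := a :: X in let B := rcons X b in
  [seq drop k B | k <- iota 0 (size B).+1] ++
  [seq x :: take (kmin A x) A | x <- A] ++
  [seq rcons (take k A) (nth a A k.-1) | k <- iota 0 (size A).+1] ++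
  [seq rcons (take (lcp X (drop q X)).+1 A) (nth a X (q + lcp X (drop q X)))
     | q <- iota 0 (size X)].

Lemma size_cand (S : eqType) (a : S) X b : size (cand a X b) = 4 * size X + 5.
Proof. rewrite /cand !size_cat !size_map !size_iota /= size_rcons. lia. Qed.

Lemma size_neq (S : eqType) (s t : seq S) : size s != size t -> s != t.
Proof. by apply: contra => /eqP ->. Qed.

Lemma sz1 (S : eqType) (s1 t s2 : seq S) y : size t < size (s1 ++ rcons t y ++ s2).
Proof. rewrite !size_cat size_rcons; lia. Qed.
Lemma sz2 (S : eqType) (s1 t s2 : seq S) y : size s1 < size (s1 ++ rcons t y ++ s2).
Proof. rewrite !size_cat size_rcons; lia. Qed.
Lemma sz3 (S : eqType) (t s2 : seq S) y : size t < size (rcons t y ++ s2).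
Proof. rewrite !size_cat size_rcons; lia. Qed.

Lemma core (S : eqType) (a : S) X b w :
  MAW (a :: X) w -> ~ MAW (rcons X b) w -> w \in cand a X b.
Proof.
set A := a :: X; set B := rcons X b.
move=> [nA HA] nMB.
case oB: (occurs w B).
  have sw : suffix w B := occ_B_notA oB nA.
  rewrite /cand mem_cat; apply/orP; left; apply/mapP.
  exists (size B - size w); first by rewrite mem_iota add0n ltnS leq_subr.
  by move: sw; rewrite suffixE => /eqP.
have [u [uw [neq nuB]]] : exists u, infix u w /\ u != w /\ ~~ occurs u B.
  apply: NNPP => Hn; apply: nMB; split; first by rewrite oB.
  move=> u uw ne; apply: NNPP => nu; apply: Hn; exists u; split => //; split => //.
  by apply/negP.
have uA := HA u uw neq.
have u0 : u != [::] by apply: contraNneq nuB => ->; rewrite /occurs infix0s.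
case/orP: (infix_proper uw neq) => uv.
-
  case: w uw neq nA HA oB nMB uv => [|x v] uw neq nA HA oB nMB /= uv.
    by move: uw; rewrite infixs0 (negbTE u0).
  have vne : v != x :: v by apply: size_neq; rewrite /= ltn_eqF.
  have vA := HA v (infix_cons v x) vne.
  have vnB : ~~ infix v B.
    by apply/negP => vB; move/negP: nuB; apply; exact: infix_trans uv vB.
  have pv : prefix v A := occ_A_notB vA vnB.
  have ev : take (size v) A = v by apply/eqP; rewrite -prefixE.
  set k := size v.
  have dlA : infix (take k (x :: v)) A.
    apply: HA; first exact: infix_take.
    by apply: size_neq; rewrite size_takel /= ?ltn_eqF.
  rewrite /cand !mem_cat; apply/orP; right; apply/orP; left; apply/mapP.
  exists x.
    apply: (mem_infix dlA).
    have vn0 : v != [::].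
      apply/eqP => v0; move: uv; rewrite v0 infixs0 => /eqP E; by rewrite E eqxx in u0.
    by rewrite /k; case: (v) vn0 => //= y t _; rewrite inE eqxx.
  suff -> : kmin A x = k by rewrite ev.
  apply: find_iota_eq.
  - by rewrite /k ltnS size_prefix.
  - by rewrite ev.
  - move=> j jk; rewrite negbK.
    apply: infix_trans dlA.
    have -> : x :: take j A = take j.+1 (take k (x :: v)).
      rewrite take_takel; last exact: jk.
      by rewrite take_cons -[in take j v]ev take_takel //; apply: ltnW.
    exact: infix_take.
-
  move: uw neq nA HA oB nMB uv; case/lastP: w => [|v' y] uw neq nA HA oB nMB.
    by move: uw; rewrite infixs0 (negbTE u0).
  rewrite size_rcons /= -cats1 take_size_cat // => uv.
  rewrite cats1 in uw neq nA HA oB nMB *.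
  have vne : v' != rcons v' y by apply: size_neq; rewrite size_rcons ltn_eqF.
  have vA := HA v' (infix_rcons v' y) vne.
  have vnB : ~~ infix v' B.
    by apply/negP => vB; move/negP: nuB; apply; exact: infix_trans uv vB.
  have pv : prefix v' A := occ_A_notB vA vnB.
  have ev : take (size v') A = v' by apply/eqP; rewrite -prefixE.
  case: v' uw u0 uv neq nA HA oB nMB vne vA vnB pv ev => [|z t] uw u0 uv neq nA HA oB nMB vne vA vnB pv ev.
    by move: uv; rewrite infixs0 (negbTE u0).
  move: (ev); rewrite /A /= => -[ez et].
  have btA : infix (rcons t y) A.
    apply: HA; first by rewrite rcons_cons; exact: infix_cons.
    by apply: size_neq; rewrite rcons_cons /= ltn_eqF.
  move: btA; rewrite /A infix_consl => /orP [pb | ib].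
  + rewrite /cand !mem_cat; apply/orP; right; apply/orP; right; apply/orP; left.
    apply/mapP; exists (size t).+1.
      by rewrite mem_iota add0n ltnS -[(size t).+1]/(size (z :: t)) size_prefix.
    have ev' : take (size t).+1 (a :: X) = z :: t := ev.
    rewrite ev' -rcons_cons; congr (rcons _ _).
    move: pb; rewrite prefixE size_rcons => /eqP E.
    have := f_equal (nth a ^~ (size t)) E.
    rewrite nth_rcons ltnn eqxx nth_take //.
  + move/infixP: ib => [s1 [s2 EX]].
    set j := size t.
    have hnth : nth a X (size s1 + j) = y.
      by rewrite EX nth_cat ltnNge leq_addr /= addKn nth_cat size_rcons ltnS leqnn nth_rcons ltnn eqxx.
    have edrop : drop (size s1) X = rcons t y ++ s2 by rewrite EX drop_size_cat.
    have jX : j < size X by rewrite EX; apply: sz1.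
    have tX : take j X = t by rewrite -et.
    have hne : nth a X j != y.
      apply/negP => /eqP E; move/negP: nA; apply.
      have -> : rcons (z :: t) y = take j.+2 A.
        rewrite (take_nth a) /=; last by rewrite ltnS.
        by rewrite tX E ez.
      exact: infix_take.
    have hl : lcp X (drop (size s1) X) = j.
      apply: (@lcp_eq S a X (drop (size s1) X) j).
      - by rewrite tX edrop -cats1 -catA take_size_cat.
      - exact: jX.
      - by rewrite edrop; apply: sz3.
      - by rewrite edrop nth_cat size_rcons ltnS leqnn nth_rcons ltnn eqxx.
    rewrite /cand !mem_cat; apply/orP; right; apply/orP; right; apply/orP; right.
    apply/mapP; exists (size s1).
      by rewrite mem_iota add0n /=; move: (sz2 s1 t s2 y); rewrite -EX.
    have ev' : take (size t).+1 (a :: X) = z :: t := ev.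
    by rewrite hl hnth ev'.
Qed.

Import Order.TTheory GRing.Theory Num.Theory.
Lemma card_from_list (S : eqType) (P : seq S -> Prop) (cs : seq (seq S)) (k : rat) :
  (forall w, P w -> w \in cs) -> ((size cs)%:R <= k)%R -> card_le P k.
Proof.
move=> Hc Hk.
pose dec w := if excluded_middle_informative (P w) then true else false.
exists (undup [seq w <- cs | dec w]); split.
- exact: undup_uniq.
- move=> w; rewrite mem_undup mem_filter /dec.
  case: excluded_middle_informative => p /=; split => //.
  by move=> _; apply: Hc.
- apply: Order.POrderTheory.le_trans Hk; rewrite ler_nat.
  apply: leq_trans (size_undup _) _; rewrite size_filter; exact: count_size.
Qed.

Lemma upper (S : eqType) (a : S) X b :
  card_le (MAW_symdiff (a :: X) (rcons X b)) (10%:R * (size X).+1%:R)%R.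
Proof.
apply: (card_from_list (cs := cand a X b ++ map rev (cand b (rev X) a))).
- move=> w [[m nm] | [m nm]]; rewrite mem_cat; apply/orP.
    by left; apply: core.
  right; apply/mapP; exists (rev w); last by rewrite revK.
  apply: core.
    by rewrite -rev_rcons; apply: MAW_rev.
  move=> h; apply: nm; have := MAW_rev h; by rewrite -rev_cons !revK.
- rewrite size_cat size_map !size_cand size_rev -natrM ler_nat; lia.
Qed.

Lemma infix2_iota x y m n : infix [:: x; y] (iota m n) -> y = x.+1.
Proof.
elim: n m => [|n IH] m; first by [].
rewrite [iota _ _]/= infix_consl => /orP [|/IH //].
case: n {IH} => [|n] /=; first by rewrite andbF.
by case/and3P => /eqP -> /eqP ->.
Qed.

Lemma infix2 (S : eqType) (u : seq S) x y :
  infix u [:: x; y] -> u != [:: x; y] -> [\/ u = [::], u = [:: x] | u = [:: y]].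
Proof.
rewrite infix_consl => /orP [|].
  case: u => [|c [|c' r]] /=; first by move=> _ _; constructor 1.
    by rewrite andbT => /eqP -> _; constructor 2.
  by case: r => [|? ?] /=; rewrite ?andbT ?andbF // => /andP [/eqP -> /eqP ->]; rewrite eqxx.
rewrite infixs1 => /orP [/eqP -> | /eqP ->] _; [by constructor 1 | by constructor 3].
Qed.

Lemma lower (d : nat) : 1 <= d ->
  card_ge (MAW_symdiff (iota 0 d) (iota 1 d)) (1 * d%:R)%R.
Proof.
move=> d1.
exists ([:: 0] :: [:: d] :: [seq [:: 0; k] | k <- iota 2 (d - 2)]); split.
- rewrite /= !inE map_inj_uniq ?iota_uniq; last by move=> ? ? [].
  rewrite andbT negb_or; apply/andP; split; first (apply/andP; split).
  + by apply/eqP => -[E]; move: d1; rewrite -E.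
  + by apply/mapP => -[].
  + by apply/mapP => -[].
- move=> w; rewrite !inE => /orP [/eqP -> | /orP [/eqP -> | /mapP [k kI ->]]].
  + right; split.
      split; first by rewrite /occurs infix1s mem_iota.
      move=> u; rewrite infixs1 => /orP [/eqP -> | /eqP -> ]; last by rewrite eqxx.
      by rewrite /occurs infix0s.
    by move=> [+ _]; rewrite /occurs infix1s mem_iota /= add0n d1.
  + left; split.
      split; first by rewrite /occurs infix1s mem_iota /= add0n ltnn.
      move=> u; rewrite infixs1 => /orP [/eqP -> | /eqP -> ]; last by rewrite eqxx.
      by rewrite /occurs infix0s.
    by move=> [+ _]; rewrite /occurs infix1s mem_iota /= d1 add1n ltnSn.
  + move: kI; rewrite mem_iota => /andP [k2 kd].
    have kd' : k < d by lia.
    left; split.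
      split.
        by apply/negP => /infix2_iota E; move: k2; rewrite E.
      move=> u uw ne; case: (infix2 uw ne) => ->; rewrite /occurs.
      * exact: infix0s.
      * by rewrite infix1s mem_iota add0n /=; lia.
      * by rewrite infix1s mem_iota add0n /=.
    move=> [_ H].
    have := H [:: 0] (isT : infix [:: 0] [:: 0; k]) isT.
    by rewrite /occurs infix1s mem_iota.
- rewrite mul1r ler_nat /= size_map size_iota; lia.
Qed.

Theorem corollary3 :
  (exists C : rat,
     forall (Sigma : eqType) (d : nat) (T : seq Sigma) (i : nat),
       0 < d -> d < size T -> 1 <= i <= size T - d ->
       card_le (MAW_symdiff (window T i d) (window T i.+1 d)) (C * d%:R)%R)
  /\
  (exists c : rat, (0 < c)%R /\
     forall d : nat, 1 <= d ->
       exists (Sigma : eqType) (T' : seq Sigma) (j : nat),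
         1 <= j <= size T' - d /\
         card_ge (MAW_symdiff (window T' j d) (window T' j.+1 d)) (c * d%:R)%R).
Proof.
split.
- exists (10%:R)%R => Sigma d T i d0 dT /andP [i1 iT].
  case: d d0 dT iT => [//|d'] _ dT iT.
  have hY : d'.+1 < size (drop i.-1 T) by rewrite size_drop; lia.
  have ED : drop i T = behead (drop i.-1 T).
    rewrite -drop1 drop_drop; congr drop; lia.
  move: ED; case EY: (drop i.-1 T) hY => [//|a Y'] hY /= ED.
  rewrite /window /= EY ED /= (take_nth a); last by [].
  have := upper a (take d' Y') (nth a Y' d').
  by rewrite size_takel // ltnW.
- exists 1%R; split; first exact: ltr01.
  move=> d d1; exists nat, (iota 0 d.+1), 1; split.
    by rewrite size_iota subSnn.
  rewrite /window /= drop0 -/(iota 0 d.+1) !take_iota.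
  rewrite (_ : minn d d.+1 = d); last by apply/minn_idPl.
  rewrite minnn.
  exact: lower.
Qed.
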